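(* Let $(V,\|\cdot\|)$ be a rectilinear normed plane, i.e. one whose unit circle is a parallelogram. Then $c_B(\|\cdot\|)=\frac12$.
   Context: A normed (Minkowski) plane $(V,\|\cdot\|)$ is a two-dimensional real vector space with a norm; $o$ is the origin, $B=\{v:\|v\|\le1\}$ the unit ball, $S=\{v:\|v\|=1\}$ the unit circle. For distinct $x,y$, $\mathrm{bis}(x,y)=\{z\in V:\|z-x\|=\|z-y\|\}$. For $x\in S$, the inner projection is $\mathrm{P_I}(x)=\{z/\|z\|: z\in(\mathrm{bis}(-x,x)\cap B)\setminus\{o\}\}$. The sine function is $s:S\times S\to\mathbb{R}$, $s(u,v)=\inf_{t\in\mathbb{R}}\|u+tv\|$. The constant $c_B$ is $c_B(\|\cdot\|)=\inf_{x\in S}\ \inf_{w\in\mathrm{P_I}(x)} s(w,x)$. *)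

(* Defs.v *)
From Stdlib Require Import Reals Lra.
Open Scope R_scope.

(* The plane V is modelled as R^2 = R * R (every 2-dim real vector space is
   linearly isomorphic to it). *)
Definition vec := (R * R)%type.
Definition vadd (x y : vec) : vec := (fst x + fst y, snd x + snd y).
Definition vscal (k : R) (x : vec) : vec := (k * fst x, k * snd x).
Definition vopp (x : vec) : vec := vscal (-1) x.
Definition vsub (x y : vec) : vec := vadd x (vopp y).
Definition vzero : vec := (0, 0).

Definition is_norm (N : vec -> R) : Prop :=
  (forall x, N x = 0 -> x = vzero) /\
  (forall k x, N (vscal k x) = Rabs k * N x) /\
  (forall x y, N (vadd x y) <= N x + N y).

Definition is_glb (E : R -> Prop) (m : R) : Prop :=
  (forall y, E y -> m <= y) /\
  (forall m', (forall y, E y -> m' <= y) -> m' <= m).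

Definition bis (N : vec -> R) (x y z : vec) : Prop := N (vsub z x) = N (vsub z y).

Definition inner_proj (N : vec -> R) (x w : vec) : Prop :=
  exists z, bis N (vopp x) x z /\ N z <= 1 /\ z <> vzero /\ w = vscal (/ N z) z.

Definition sine_is (N : vec -> R) (u v : vec) (r : R) : Prop :=
  is_glb (fun y => exists t : R, y = N (vadd u (vscal t v))) r.

(* c = c_B(N) = inf_{x in S} inf_{w in P_I(x)} s(w,x)
   (the iterated infimum equals the infimum of the union of the value sets) *)
Definition cB_is (N : vec -> R) (c : R) : Prop :=
  is_glb (fun r => exists x w, N x = 1 /\ inner_proj N x w /\ sine_is N w x r) c.

(* Rectilinear: the unit circle is a parallelogram, i.e. (being centrally
   symmetric, it is centred at o) there are linearly independent u, v such that
   S = { a u + b v : |a| + |b| = 1 } (the parallelogram with vertices +-u, +-v). *)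
Definition rectilinear (N : vec -> R) : Prop :=
  exists u v : vec,
    fst u * snd v - snd u * fst v <> 0 /\
    forall x, N x = 1 <->
      exists a b, x = vadd (vscal a u) (vscal b v) /\ Rabs a + Rabs b = 1.

(* Main.v *)
Require Import Defs.
From Stdlib Require Import Reals.
From Stdlib Require Import Lra Psatz.
Open Scope R_scope.

Ltac veq := unfold vsub, vopp, vadd, vscal, vzero; simpl; f_equal; ring.
Ltac rabs := unfold Rabs in *; repeat destruct Rcase_abs; try lra; try nra.

Lemma Rabs_m1 : Rabs (-1) = 1.
Proof. rabs. Qed.

Lemma tri N (HN : is_norm N) a b c : c = vadd a b -> N c <= N a + N b.
Proof. intros ->. apply HN. Qed.

Lemma hom N (HN : is_norm N) k a c : c = vscal k a -> N c = Rabs k * N a.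
Proof. intros ->. apply HN. Qed.

Lemma N0 N (HN : is_norm N) : N vzero = 0.
Proof.
  rewrite (hom N HN 0 vzero vzero) by veq. rewrite Rabs_R0. ring.
Qed.

Lemma Nnn N (HN : is_norm N) x : 0 <= N x.
Proof.
  destruct x as [x1 x2].
  pose proof (tri N HN (x1,x2) (vscal (-1) (x1,x2)) vzero ltac:(veq)) as H.
  rewrite N0 in H by auto.
  rewrite (hom N HN (-1) (x1,x2) (vscal (-1) (x1,x2))) in H by reflexivity.
  rewrite Rabs_m1 in H. lra.
Qed.

Lemma lb N (HN : is_norm N) x z : N x = 1 -> N z <= 1 ->
  N (vadd z x) = N (vsub z x) -> forall t, N z / 2 <= N (vadd z (vscal t x)).
Proof.
  destruct x as [x1 x2]; destruct z as [z1 z2]; intros Hx Hz Hd t.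
  set (d := N (vadd (z1,z2) (x1,x2))).
  set (y := N (vadd (z1,z2) (vscal t (x1,x2)))).
  assert (H1 : 2 <= d + d).
  { pose proof (tri N HN (vadd (z1,z2) (x1,x2)) (vscal (-1) (vsub (z1,z2) (x1,x2)))
      (vscal 2 (x1,x2)) ltac:(veq)) as H.
    rewrite (hom N HN 2 (x1,x2) _ eq_refl) in H.
    rewrite (hom N HN (-1) (vsub (z1,z2) (x1,x2)) _ eq_refl) in H.
    rewrite Rabs_m1, Hx in H. rewrite (Rabs_pos_eq 2) in H by lra.
    unfold d. lra. }
  assert (H2 : d <= y + Rabs (1 - t)).
  { pose proof (tri N HN (vadd (z1,z2) (vscal t (x1,x2))) (vscal (1-t) (x1,x2))
      (vadd (z1,z2) (x1,x2)) ltac:(veq)) as H.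
    rewrite (hom N HN (1-t) (x1,x2) _ eq_refl), Hx in H. unfold d, y. lra. }
  assert (H3 : d <= y + Rabs (-1 - t)).
  { pose proof (tri N HN (vadd (z1,z2) (vscal t (x1,x2))) (vscal (-1-t) (x1,x2))
      (vsub (z1,z2) (x1,x2)) ltac:(veq)) as H.
    rewrite (hom N HN (-1-t) (x1,x2) _ eq_refl), Hx in H. unfold d, y. lra. }
  assert (H4 : N (z1,z2) <= y + Rabs (- t)).
  { pose proof (tri N HN (vadd (z1,z2) (vscal t (x1,x2))) (vscal (-t) (x1,x2))
      (z1,z2) ltac:(veq)) as H.
    rewrite (hom N HN (-t) (x1,x2) _ eq_refl), Hx in H. unfold y. lra. }
  assert (H5 : Rabs t <= y + N (z1,z2)).
  { pose proof (tri N HN (vadd (z1,z2) (vscal t (x1,x2))) (vscal (-1) (z1,z2))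
      (vscal t (x1,x2)) ltac:(veq)) as H.
    rewrite (hom N HN t (x1,x2) _ eq_refl), Hx in H.
    rewrite (hom N HN (-1) (z1,z2) _ eq_refl), Rabs_m1 in H. unfold y. lra. }
  fold y. rabs.
Qed.

Lemma lbw N (HN : is_norm N) x z : N x = 1 -> N z <= 1 -> z <> vzero ->
  N (vadd z x) = N (vsub z x) -> forall s, 1/2 <= N (vadd (vscal (/ N z) z) (vscal s x)).
Proof.
  intros Hx Hz Hz0 Hd s.
  assert (Hp : 0 < N z).
  { destruct (Nnn N HN z) as [h|h]; auto. exfalso. apply Hz0. apply HN. auto. }
  pose proof (lb N HN x z Hx Hz Hd (s * N z)) as H.
  rewrite (hom N HN (/ N z) (vadd z (vscal (s * N z) x))).
  2:{ destruct x, z; unfold vsub, vopp, vadd, vscal, vzero; simpl; f_equal; field; lra. }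
  rewrite Rabs_pos_eq by (left; apply Rinv_0_lt_compat; lra).
  apply Rmult_le_reg_l with (N z); [lra|].
  rewrite <- Rmult_assoc, Rinv_r by lra. lra.
Qed.

Lemma rect_norm N (HN : is_norm N) u v
  (Hc : forall x, N x = 1 <->
      exists a b, x = vadd (vscal a u) (vscal b v) /\ Rabs a + Rabs b = 1) :
  forall a b, N (vadd (vscal a u) (vscal b v)) = Rabs a + Rabs b.
Proof.
  intros a b.
  pose proof (Rabs_pos a) as Pa; pose proof (Rabs_pos b) as Pb.
  destruct (Req_dec (Rabs a + Rabs b) 0) as [Hz|Hnz].
  - assert (Ra : Rabs a = 0) by lra. assert (Rb : Rabs b = 0) by lra.
    pose proof (tri N HN (vscal a u) (vscal b v) _ eq_refl) as H.
    rewrite (hom N HN a u _ eq_refl), (hom N HN b v _ eq_refl), Ra, Rb in H.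
    pose proof (Nnn N HN (vadd (vscal a u) (vscal b v))). lra.
  - set (s := Rabs a + Rabs b) in *.
    assert (Hs : 0 < s) by (unfold s in *; lra).
    assert (H1 : N (vadd (vscal (a/s) u) (vscal (b/s) v)) = 1).
    { apply Hc. exists (a/s), (b/s). split; [reflexivity|].
      unfold Rdiv; rewrite !Rabs_mult, (Rabs_pos_eq (/s))
        by (left; apply Rinv_0_lt_compat; lra).
      unfold s; field; fold s; lra. }
    rewrite (hom N HN (/s) (vadd (vscal a u) (vscal b v))) in H1.
    2:{ destruct u, v; unfold vadd, vscal; simpl; f_equal; unfold Rdiv; ring. }
    rewrite Rabs_pos_eq in H1 by (left; apply Rinv_0_lt_compat; lra).
    replace (N (vadd (vscal a u) (vscal b v)))
      with (s * (/ s * N (vadd (vscal a u) (vscal b v)))) by (field; lra).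
    rewrite H1. ring.
Qed.

Theorem mainTheorem14 (N : vec -> R) (HN : is_norm N) (Hrect : rectilinear N) :
  cB_is N (1/2).
Proof.
  unfold cB_is, is_glb. split.
  - intros r [x [w [Hx [Hw Hs]]]]. destruct Hs as [_ Hs]. apply Hs.
    intros y [t ->]. destruct Hw as [z [Hb [Hz [Hz0 ->]]]].
    apply lbw; auto.
    unfold bis in Hb. rewrite <- Hb. f_equal. destruct z, x; veq.
  - intros m Hm.
    destruct Hrect as [u [v [_ Hc]]].
    pose proof (rect_norm N HN u v Hc) as Nuv.
    assert (Hup : forall p, 1/2 < p < 1 -> m <= / (2 * p)).
    { intros p Hp. set (q := 1 - p).
      apply Hm. exists (vadd (vscal p u) (vscal q v)),
                        (vadd (vscal (1/2) u) (vscal (-1/2) v)).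
      split; [rewrite Nuv; unfold q; rabs|]. split.
      - exists (vadd (vscal q u) (vscal (-q) v)).
        assert (Nz : N (vadd (vscal q u) (vscal (- q) v)) = 2 * q)
          by (rewrite Nuv; unfold q; rabs).
        split; [|split; [|split]].
        + unfold bis.
          replace (vsub (vadd (vscal q u) (vscal (-q) v))
                (vopp (vadd (vscal p u) (vscal q v))))
           with (vadd (vscal (q+p) u) (vscal (-q+q) v)) by (destruct u, v; veq).
          replace (vsub (vadd (vscal q u) (vscal (-q) v))
                (vadd (vscal p u) (vscal q v)))
           with (vadd (vscal (q-p) u) (vscal (-q-q) v)) by (destruct u, v; veq).
          rewrite !Nuv. unfold q; rabs.
        + rewrite Nz. unfold q; lra.
        + intro E. rewrite E, N0 in Nz by auto. unfold q in Nz; lra.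
        + rewrite Nz. destruct u, v. unfold vadd, vscal; simpl.
          unfold q; f_equal; field; lra.
      - split.
        + intros y [t ->].
          replace (vadd (vadd (vscal (1/2) u) (vscal (-1/2) v))
                (vscal t (vadd (vscal p u) (vscal q v))))
           with (vadd (vscal (1/2 + t*p) u) (vscal (-1/2 + t*q) v))
            by (destruct u, v; veq).
          rewrite Nuv.
          assert (K : 1/2 <= p * (Rabs (1/2 + t*p) + Rabs (-1/2 + t*q))).
          { assert (K1 : 1/2 <= q * Rabs (1/2 + t*p) + p * Rabs (-1/2 + t*q))
              by (unfold q in *; rabs).
            pose proof (Rabs_pos (1/2 + t*p)).
            unfold q in *. nra. }
          apply Rmult_le_reg_l with (2*p); [lra|].
          rewrite Rinv_r by lra. lra.
        + intros m' Hm'. apply Hm'. exists (- / (2*p)).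
          replace (vadd (vadd (vscal (1/2) u) (vscal (-1/2) v))
                (vscal (- / (2*p)) (vadd (vscal p u) (vscal q v))))
           with (vadd (vscal 0 u) (vscal (- / (2*p)) v)).
          2:{ destruct u, v. unfold vadd, vscal; simpl.
              unfold q; f_equal; field; lra. }
          rewrite Nuv, Rabs_R0, Rabs_Ropp, Rplus_0_l.
          rewrite Rabs_pos_eq by (left; apply Rinv_0_lt_compat; lra).
          reflexivity. }
    destruct (Rle_dec m (1/2)) as [h|h]; auto.
    exfalso.
    set (k := / (2 * m)).
    assert (Hk : k * (2 * m) = 1) by (unfold k; field; lra).
    assert (Hk0 : 0 < k) by (unfold k; apply Rinv_0_lt_compat; lra).
    assert (Hk1 : k < 1) by nra.
    pose proof (Hup ((1 + k)/2) ltac:(lra)) as H.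
    pose proof (Rmult_le_compat_r (2*((1+k)/2)) _ _ ltac:(lra) H) as H2.
    rewrite Rinv_l in H2 by lra.
    nra.
Qed.
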